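(* Let $\lambda>1$, $A=\mathrm{diag}(1,\lambda)$, and $f(x)=\tfrac12 x^TAx$ on $\mathbb{R}^2$. Consider the iteration $x_{k+1}=x_k-\alpha_kg_k$, $g_k=Ax_k$, where $x_1\in\mathbb{R}^2$, $x_2=x_1-\alpha_1g_1$ for some $\alpha_1>0$, and for $k\ge 2$ $$\alpha_k=\gamma_k\frac{s_{k-1}^Ts_{k-1}}{s_{k-1}^Ty_{k-1}}+(1-\gamma_k)\frac{s_{k-1}^Ty_{k-1}}{y_{k-1}^Ty_{k-1}},\qquad s_{k-1}=x_k-x_{k-1},\ y_{k-1}=g_k-g_{k-1},$$ with $\gamma_k\in(0,1)$ for all $k$. Assume $g_1^{(i)}\neq0$ and $g_2^{(i)}\ne0$ for $i=1,2$. Let $q_k=(g_k^{(1)})^2/(g_k^{(2)})^2$, $M_k=\log q_k$, let $\theta$ be a root of $\theta^2-\theta+2=0$, and $\xi_k=M_k+(\theta-1)M_{k-1}$. If $|\xi_2|>8\log\lambda$, then there exists $c_1>0$ such that for all $k\ge2$, $$\max_{-1\le i\le 3}M_{k+i}\ge(\sqrt2-1)^2 2^{k/2}c_1-2c_1,\qquad \min_{-1\le i\le 3}M_{k+i}\le-(\sqrt2-1)^2 2^{k/2}c_1+2c_1.$$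
   Context: $g_k^{(i)}$ denotes the $i$-th component of $g_k$; under these assumptions all components stay nonzero so $M_k$ is defined for all $k\ge1$. $\theta$ is complex and $|\cdot|$ is the complex modulus. *)

(* Defs.v *)
From Stdlib Require Import Reals.
From Coquelicot Require Import Coquelicot.
Open Scope R_scope.

Definition vec2 := (R * R)%type.
Definition dot2 (u v : vec2) : R := fst u * fst v + snd u * snd v.
Definition sub2 (u v : vec2) : vec2 := (fst u - fst v, snd u - snd v).
Definition scal2 (a : R) (u : vec2) : vec2 := (a * fst u, a * snd u).

(* A = diag(1, lambda); gradient of f(x) = 1/2 x^T A x is A x. *)
Definition Amul (lam : R) (u : vec2) : vec2 := (fst u, lam * snd u).

Definition Mval (g : vec2) : R := ln ((fst g) ^ 2 / (snd g) ^ 2).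

(* Main.v *)
Require Import Defs.
From Stdlib Require Import Reals Lra Psatz Lia.
From Coquelicot Require Import Coquelicot.
Open Scope R_scope.

Lemma step_core lam a b c d al ga : 1 < lam -> a<>0 -> b<>0 -> c<>0 -> d<>0 -> 0<ga<1 ->
  al = ga * ((a*a+b*b)/(a*a+lam*(b*b))) + (1-ga)*((a*a+lam*(b*b))/(a*a+lam*lam*(b*b))) ->
  1/lam < al < 1 /\
  0 < ln (((1-al)*c)^2/((1-lam*al)*d)^2) - ln (c^2/d^2) + 2*ln(a^2/b^2) < 2 * ln lam.
Proof.
  intros Hl Ha Hb Hc Hd Hg Hal.
  assert (HP : 0 < a*a) by (apply Rsqr_pos_lt; auto).
  assert (HQ : 0 < b*b) by (apply Rsqr_pos_lt; auto).
  set (P := a*a) in *. set (Q := b*b) in *.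
  assert (D1 : 0 < P + lam*Q) by nra.
  assert (D2 : 0 < P + lam*lam*Q) by nra.
  set (B1 := (P+Q)/(P+lam*Q)) in *. set (B2 := (P+lam*Q)/(P+lam*lam*Q)) in *.
  assert (e1 : B1 * (P+lam*Q) = P+Q) by (unfold B1; field; lra).
  assert (e2 : B2 * (P+lam*lam*Q) = P+lam*Q) by (unfold B2; field; lra).
  clearbody B1 B2.
  assert (h1 : B1 < 1) by nra.
  assert (h2 : 1 < lam * B2) by nra.
  assert (h3 : B2 < B1).
  { assert (B1 * (P+lam*Q) * (P+lam*lam*Q) > B2 * (P+lam*lam*Q) * (P+lam*Q)).
    rewrite e1, e2. assert (0 < P*Q*((lam-1)*(lam-1))) by (apply Rmult_lt_0_compat; nra). nra.
    assert (0 < (P+lam*Q) * (P+lam*lam*Q)) by nra. nra. }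
  assert (hB2 : B2 < al).
  { rewrite Hal. assert (0 < ga * (B1 - B2)) by (apply Rmult_lt_0_compat; lra). lra. }
  assert (hB1 : al < B1).
  { rewrite Hal. assert (0 < (1-ga) * (B1 - B2)) by (apply Rmult_lt_0_compat; lra). lra. }
  assert (hl1 : 1 < lam * al) by nra.
  assert (hal : 1/lam < al).
  { apply (Rmult_lt_reg_l lam). lra. field_simplify; lra. }
  split. split; lra.
  set (r := (1-al)/(lam*al-1)).
  assert (hr0 : 0 < r) by (unfold r; apply Rdiv_lt_0_compat; lra).
  assert (er : r * (lam*al - 1) = 1 - al) by (unfold r; field; lra).
  clearbody r.
  assert (hr1 : r * P > Q) by nra.
  assert (hr2 : r * P < lam * Q) by nra.
  assert (E : ((1-al)*c)^2/((1-lam*al)*d)^2 = (c^2/d^2) * (r*r)).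
  { rewrite <- er. field. split; [auto|lra]. }
  assert (Hcd : 0 < c^2/d^2).
  { apply Rdiv_lt_0_compat; [replace (c^2) with (c*c) by ring|replace (d^2) with (d*d) by ring]; apply Rsqr_pos_lt; auto. }
  rewrite E, ln_mult, ln_mult by nra.
  assert (Eab : a^2/b^2 = P / Q) by (unfold P, Q; field; auto).
  rewrite Eab.
  assert (L1 : ln (Q/P) < ln r).
  { apply ln_increasing. apply Rdiv_lt_0_compat; lra.
    apply (Rmult_lt_reg_r P); auto. field_simplify; lra. }
  assert (L2 : ln r < ln (lam * (Q/P))).
  { apply ln_increasing; auto.
    apply (Rmult_lt_reg_r P); auto. field_simplify; lra. }
  rewrite ln_mult in L2 by (try lra; apply Rdiv_lt_0_compat; lra).
  assert (L3 : ln (Q/P) = - ln (P/Q)).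
  { rewrite <- ln_Rinv by (apply Rdiv_lt_0_compat; lra). f_equal. field. lra. }
  lra.
Qed.

Lemma tri p s d : 0 <= d -> sqrt (p^2 + s^2) - d <= sqrt ((p+d)^2 + s^2).
Proof.
  intros Hd.
  set (A := sqrt ((p+d)^2 + s^2)).
  assert (HA0 : 0 <= A) by apply sqrt_pos.
  assert (HA : - (p+d) <= A).
  { apply (Rle_trans _ (Rabs (p+d))).
    rewrite <- Rabs_Ropp. apply Rle_abs.
    rewrite <- sqrt_Rsqr_abs. unfold A. apply sqrt_le_1_alt. unfold Rsqr.
    pose proof (Rle_0_sqr s) as Hs2; unfold Rsqr in Hs2. replace ((p+d)^2) with ((p+d)*(p+d)) by ring. replace (s^2) with (s*s) by ring. lra. }
  assert (HA2 : A * A = (p+d)^2 + s^2).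
  { unfold A. apply sqrt_sqrt. pose proof (Rle_0_sqr s) as Hs2; unfold Rsqr in Hs2. pose proof (Rle_0_sqr (p+d)) as Hpd; unfold Rsqr in Hpd. replace ((p+d)^2) with ((p+d)*(p+d)) by ring. replace (s^2) with (s*s) by ring. lra. }
  assert (sqrt (p^2+s^2) <= A + d).
  { rewrite <- (sqrt_pow2 (A + d)) by lra. apply sqrt_le_1_alt.
    assert (0 <= d * (p + d + A)) by (apply Rmult_le_pos; lra).
    simpl. nra. }
  lra.
Qed.

Theorem lemma2 (lam : R) (x : nat -> vec2) (alpha gamma : nat -> R) (theta : C) :
  1 < lam ->
  (* iteration x_{k+1} = x_k - alpha_k g_k, g_k = A x_k, for k >= 1 *)
  (forall k : nat, (1 <= k)%nat ->
     x (S k) = sub2 (x k) (scal2 (alpha k) (Amul lam (x k)))) ->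
  0 < alpha 1%nat ->
  (* step-size rule for k >= 2 *)
  (forall k : nat, (2 <= k)%nat ->
     let s := sub2 (x k) (x (k - 1)%nat) in
     let y := sub2 (Amul lam (x k)) (Amul lam (x (k - 1)%nat)) in
     alpha k = gamma k * (dot2 s s / dot2 s y)
               + (1 - gamma k) * (dot2 s y / dot2 y y)) ->
  (forall k : nat, (2 <= k)%nat -> 0 < gamma k < 1) ->
  fst (Amul lam (x 1%nat)) <> 0 -> snd (Amul lam (x 1%nat)) <> 0 ->
  fst (Amul lam (x 2%nat)) <> 0 -> snd (Amul lam (x 2%nat)) <> 0 ->
  (* theta is a (complex) root of theta^2 - theta + 2 = 0 *)
  Cplus (Cminus (Cmult theta theta) theta) (RtoC 2) = RtoC 0 ->
  (* |xi_2| > 8 log lambda, xi_k = M_k + (theta - 1) M_{k-1} *)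
  Cmod (Cplus (RtoC (Mval (Amul lam (x 2%nat))))
              (Cmult (Cminus theta (RtoC 1)) (RtoC (Mval (Amul lam (x 1%nat))))))
    > 8 * ln lam ->
  exists c1 : R, 0 < c1 /\
    forall k : nat, (2 <= k)%nat ->
      let M := fun j : nat => Mval (Amul lam (x j)) in
      Rmax (M (k - 1)%nat) (Rmax (M k) (Rmax (M (k + 1)%nat)
        (Rmax (M (k + 2)%nat) (M (k + 3)%nat))))
        >= (sqrt 2 - 1) ^ 2 * Rpower 2 (INR k / 2) * c1 - 2 * c1 /\
      Rmin (M (k - 1)%nat) (Rmin (M k) (Rmin (M (k + 1)%nat)
        (Rmin (M (k + 2)%nat) (M (k + 3)%nat))))
        <= - ((sqrt 2 - 1) ^ 2 * Rpower 2 (INR k / 2) * c1) + 2 * c1.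
Proof.
  intros Hl Hx Ha1 Hal Hga Hg1a Hg1b Hg2a Hg2b Hth Hxi.
  set (g := fun j => Amul lam (x j)) in *.
  assert (gstep : forall k, (1 <= k)%nat -> fst (g (S k)) = (1 - alpha k) * fst (g k) /\
      snd (g (S k)) = (1 - lam * alpha k) * snd (g k)).
  { intros k Hk. unfold g. rewrite (Hx k Hk). unfold Amul, sub2, scal2. simpl. split; ring. }
  assert (aform : forall n, alpha (S n) <> 0 -> fst (g (S n)) <> 0 -> snd (g (S n)) <> 0 ->
     alpha (S (S n)) = gamma (S (S n)) * ((fst (g (S n)) * fst (g (S n)) + snd (g (S n)) * snd (g (S n)))
        / (fst (g (S n)) * fst (g (S n)) + lam * (snd (g (S n)) * snd (g (S n)))))
      + (1 - gamma (S (S n))) * ((fst (g (S n)) * fst (g (S n)) + lam * (snd (g (S n)) * snd (g (S n))))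
        / (fst (g (S n)) * fst (g (S n)) + lam * lam * (snd (g (S n)) * snd (g (S n)))))).
  { intros n Hn Hna Hnb. rewrite (Hal (S (S n))) by lia. cbv zeta.
    replace (S (S n) - 1)%nat with (S n) by lia.
    rewrite (Hx (S n)) by lia. unfold g, dot2, sub2, scal2, Amul in *. destruct (x (S n)) as [x1 x2]. simpl in *.
    assert (0 < x1*x1) by (apply Rsqr_pos_lt; auto).
    assert (0 < (lam*x2)*(lam*x2)) by (apply Rsqr_pos_lt; auto).
    assert (0 < alpha (S n) * alpha (S n)) by (apply Rsqr_pos_lt; auto).
    f_equal; f_equal; field; repeat split; try nra.
    all: apply Rgt_not_eq; apply Rlt_gt; ring_simplify.
    all: match goal with |- 0 < ?e => replace e with ((x1*x1)*(alpha (S n)*alpha (S n)) + (alpha (S n)*alpha (S n))*((lam*x2)*(lam*x2))*lam) by ring end.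
    all: apply Rplus_lt_0_compat; [apply Rmult_lt_0_compat; lra | apply Rmult_lt_0_compat; [apply Rmult_lt_0_compat|]; lra]. }
  set (M := fun j => Mval (g j)).
  set (inv := fun n => fst (g (S n)) <> 0 /\ snd (g (S n)) <> 0 /\ fst (g (S (S n))) <> 0
      /\ snd (g (S (S n))) <> 0 /\ alpha (S n) <> 0).
  assert (core : forall n, inv n -> (1/lam < alpha (S (S n)) < 1 /\
      0 < M (S (S (S n))) - M (S (S n)) + 2 * M (S n) < 2 * ln lam)).
  { intros n [h1 [h2 [h3 [h4 h5]]]].
    destruct (step_core lam (fst (g (S n))) (snd (g (S n))) (fst (g (S (S n)))) (snd (g (S (S n))))
       (alpha (S (S n))) (gamma (S (S n))) Hl h1 h2 h3 h4 (Hga (S (S n)) ltac:(lia)) (aform n h5 h1 h2)) as [A B].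
    split; auto.
    unfold M, Mval. destruct (gstep (S (S n)) ltac:(lia)) as [e1 e2]. rewrite e1, e2. exact B. }
  assert (invall : forall n, inv n).
  { induction n.
    - unfold inv. repeat split; auto. apply Rgt_not_eq; lra.
    - destruct (core n IHn) as [[A1 A2] _]. destruct IHn as [h1 [h2 [h3 [h4 h5]]]].
      destruct (gstep (S (S n)) ltac:(lia)) as [e1 e2].
      assert (1 < lam * alpha (S (S n))).
      { apply (Rmult_lt_reg_l (/lam)). apply Rinv_0_lt_compat; lra.
        field_simplify; try lra. }
      assert (1 - alpha (S (S n)) <> 0) by (apply Rgt_not_eq; lra).
      assert (1 - lam * alpha (S (S n)) <> 0) by (apply Rlt_not_eq; lra).
      assert (alpha (S (S n)) <> 0) by (apply Rgt_not_eq; apply Rlt_gt; apply (Rlt_trans _ (1/lam)); [apply Rdiv_lt_0_compat|]; lra).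
      unfold inv. rewrite e1, e2. repeat split; auto.
      all: apply Rmult_integral_contrapositive_currified; auto. }
  assert (dyn : forall n, 0 < M (S (S (S n))) - M (S (S n)) + 2 * M (S n) < 2 * ln lam)
    by (intro n; exact (proj2 (core n (invall n)))).
  clear core invall inv aform gstep.
  assert (HM : forall j, Mval (Amul lam (x j)) = M j) by reflexivity.
  assert (HM1 : M 1%nat = Mval (Amul lam (x 1%nat))) by reflexivity.
  assert (HM2 : M 2%nat = Mval (Amul lam (x 2%nat))) by reflexivity.
  clearbody M.
  destruct theta as [u v].
  unfold Cplus, Cminus, Cmult, Copp, RtoC in Hth. simpl in Hth.
  injection Hth as E1 E2.
  assert (Hv : v <> 0).
  { intro Hv0. subst v. assert (0 < (u - 1/2)*(u-1/2) + 7/4) by (pose proof (Rle_0_sqr (u-1/2)); unfold Rsqr in *; lra). nra. }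
  assert (Hu : u = 1/2).
  { assert (Hm : (2*u-1)*v = 0) by nra. apply Rmult_integral in Hm. destruct Hm; [lra|contradiction]. }
  subst u.
  assert (Hv2 : v * v = 7/4) by nra.
  assert (HL : 0 < ln lam) by (rewrite <- ln_1; apply ln_increasing; lra).
  set (w := fun n => sqrt ((M (S (S n)) - M (S n) / 2)^2 + (v * M (S n))^2)).
  assert (Hw0 : w 0%nat > 8 * ln lam).
  { unfold w. unfold Cmod, Cplus, Cminus, Cmult, Copp, RtoC in Hxi. simpl in Hxi.
    match type of Hxi with sqrt ?a > _ => replace ((M 2%nat - M 1%nat / 2)^2 + (v * M 1%nat)^2) with a; [exact Hxi|] end.
    rewrite HM1, HM2. set (a1 := Mval (Amul lam (x 2%nat))). set (a2 := Mval (Amul lam (x 1%nat))). field. }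
  assert (sqv : forall z, (v * z)^2 = 7/4 * z^2).
  { intro z. replace ((v*z)^2) with ((v*v)*z^2) by ring. rewrite Hv2. field. }
  assert (wrec : forall n, w (S n) >= sqrt 2 * w n - (M (S (S (S n))) - M (S (S n)) + 2 * M (S n))).
  { intro n. unfold w. cbv beta.
    set (m0 := M (S n)). set (m1 := M (S (S n))). set (m2 := M (S (S (S n)))).
    destruct (dyn n) as [d1 d2]. fold m0 m1 m2 in d1, d2.
    pose proof (tri (m1 / 2 - 2 * m0) (v * m1) (m2 - m1 + 2 * m0)) as T.
    specialize (T ltac:(lra)).
    replace (m1 / 2 - 2 * m0 + (m2 - m1 + 2 * m0)) with (m2 - m1 / 2) in T by field.
    rewrite sqv in T. rewrite !sqv.
    replace ((m1 / 2 - 2 * m0) ^ 2 + 7 / 4 * m1 ^ 2)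
      with (2 * ((m1 - m0 / 2) ^ 2 + 7 / 4 * m0 ^ 2)) in T by field.
    rewrite sqrt_mult in T. lra. lra.
    pose proof (pow2_ge_0 (m1 - m0 / 2)). pose proof (pow2_ge_0 m0). lra. }
  set (s2 := sqrt 2) in *.
  assert (Hs2 : s2 * s2 = 2) by (apply sqrt_sqrt; lra).
  assert (Hs2p : 0 <= s2) by apply sqrt_pos.
  assert (Hs2a : 1 < s2) by nra.
  assert (Hs2b : s2 < 3/2) by nra.
  set (c := 2 * ln lam * (s2 + 1)).
  assert (Hc : s2 * c = c + 2 * ln lam) by (unfold c; replace (s2 * (2 * ln lam * (s2 + 1))) with (2 * ln lam * (s2 * s2) + 2 * ln lam * s2) by ring; rewrite Hs2; ring).
  set (E0 := w 0%nat - c).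
  assert (HE0 : 0 < E0).
  { unfold E0, c. assert (ln lam * s2 < ln lam * (3/2)) by (apply Rmult_lt_compat_l; lra). lra. }
  assert (grow : forall n, w n - c >= s2 ^ n * E0).
  { induction n.
    - simpl. unfold E0. lra.
    - pose proof (wrec n). destruct (dyn n).
      assert (s2 * (w n - c) >= s2 * (s2 ^ n * E0)) by (apply Rmult_ge_compat_l; lra).
      simpl. lra. }
  assert (HRp : forall k, Rpower 2 (INR k / 2) = s2 ^ k).
  { intro k. replace (INR k / 2) with (/2 * INR k) by field. rewrite <- Rpower_mult.
    rewrite Rpower_sqrt by lra. apply Rpower_pow. lra. }
  exists (E0 / 4). split. lra.
  intros k Hk. destruct k as [|[|n]]; try lia.
  cbv zeta beta. rewrite !HM.
  replace (S (S n) - 1)%nat with (S n) by lia.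
  replace (S (S n) + 1)%nat with (S (S (S n))) by lia.
  replace (S (S n) + 2)%nat with (S (S (S (S n)))) by lia.
  replace (S (S n) + 3)%nat with (S (S (S (S (S n))))) by lia.
  rewrite HRp.
  pose proof (grow n) as G. unfold w in G. cbv beta in G. rewrite sqv in G.
  pose proof (dyn n) as D0. pose proof (dyn (S n)) as D1. pose proof (dyn (S (S n))) as D2.
  set (m0 := M (S n)) in *. set (m1 := M (S (S n))) in *. set (m2 := M (S (S (S n)))) in *.
  set (m3 := M (S (S (S (S n))))) in *. set (m4 := M (S (S (S (S (S n)))))) in *.
  set (L := ln lam) in *.
  assert (Hpow : s2 ^ (S (S n)) = 2 * s2 ^ n) by (simpl; rewrite <- Rmult_assoc, Hs2; ring).
  rewrite Hpow.
  replace ((s2 - 1) ^ 2 * (2 * s2 ^ n) * (E0 / 4)) with ((s2 - 1) ^ 2 * (s2 ^ n * E0) / 2) by field.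
  set (t := s2 ^ n * E0) in *.
  assert (Ht : 0 <= t) by (unfold t; apply Rmult_le_pos; [apply pow_le|]; lra).
  assert (Hk1 : (s2 - 1)^2 * t <= t).
  { rewrite <- (Rmult_1_l t) at 2. apply Rmult_le_compat_r; auto. simpl. nra. }
  set (N := (m1 - m0 / 2) ^ 2 + 7 / 4 * m0 ^ 2) in *.
  assert (HN0 : 0 <= N) by (unfold N; pose proof (pow2_ge_0 (m1 - m0/2)); pose proof (pow2_ge_0 m0); lra).
  assert (HcL : c - 4 * L >= 0) by (unfold c; fold L; assert (L * s2 >= L * 1) by (apply Rmult_ge_compat_l; lra); lra).
  split.
  - set (U := Rmax m0 (Rmax m1 (Rmax m2 (Rmax m3 m4)))).
    assert (u0 : m0 <= U) by apply Rmax_l.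
    assert (u1 : m1 <= U) by (eapply Rle_trans; [|apply Rmax_r]; apply Rmax_l).
    assert (u2 : m2 <= U) by (eapply Rle_trans; [|apply Rmax_r]; eapply Rle_trans; [|apply Rmax_r]; apply Rmax_l).
    assert (u3 : m3 <= U) by (eapply Rle_trans; [|apply Rmax_r]; eapply Rle_trans; [|apply Rmax_r]; eapply Rle_trans; [|apply Rmax_r]; apply Rmax_l).
    assert (u4 : m4 <= U) by (eapply Rle_trans; [|apply Rmax_r]; eapply Rle_trans; [|apply Rmax_r]; eapply Rle_trans; [|apply Rmax_r]; apply Rmax_r).
    clearbody U.
    assert (hm0 : - U / 2 < m0) by lra.
    assert (hm1 : - U < m1) by lra.
    assert (hU : 0 < U) by lra.
    assert (p1 : 0 <= (3/2 * U - (m1 - m0/2)) * (3/2 * U + (m1 - m0/2))) by (apply Rmult_le_pos; lra).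
    assert (p2 : 0 <= (U - m0) * (U + m0)) by (apply Rmult_le_pos; lra).
    assert (HN : N <= (2 * U)^2) by (unfold N; simpl; nra).
    assert (sqrt N <= 2 * U) by (rewrite <- (sqrt_pow2 (2 * U)) by lra; apply sqrt_le_1_alt; auto).
    lra.
  - set (U := Rmin m0 (Rmin m1 (Rmin m2 (Rmin m3 m4)))).
    assert (u0 : U <= m0) by apply Rmin_l.
    assert (u1 : U <= m1) by (eapply Rle_trans; [apply Rmin_r|]; apply Rmin_l).
    assert (u2 : U <= m2) by (eapply Rle_trans; [apply Rmin_r|]; eapply Rle_trans; [apply Rmin_r|]; apply Rmin_l).
    assert (u3 : U <= m3) by (eapply Rle_trans; [apply Rmin_r|]; eapply Rle_trans; [apply Rmin_r|]; eapply Rle_trans; [apply Rmin_r|]; apply Rmin_l).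
    assert (u4 : U <= m4) by (eapply Rle_trans; [apply Rmin_r|]; eapply Rle_trans; [apply Rmin_r|]; eapply Rle_trans; [apply Rmin_r|]; apply Rmin_r).
    clearbody U.
    set (V := - U) in *. assert (HVU : V = - U) by reflexivity. clearbody V.
    assert (hm0 : m0 <= V / 2 + 3/2 * L) by lra.
    assert (hm1 : m1 <= V + 2 * L) by lra.
    assert (hV : - L <= V) by lra.
    set (W := V + 2 * L). assert (HW : W = V + 2 * L) by reflexivity. clearbody W.
    assert (p1 : 0 <= (3/2 * W - (m1 - m0/2)) * (3/2 * W + (m1 - m0/2))) by (apply Rmult_le_pos; lra).
    assert (p2 : 0 <= (W - m0) * (W + m0)) by (apply Rmult_le_pos; lra).
    assert (HN : N <= (2 * W)^2) by (unfold N; simpl; nra).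
    assert (sqrt N <= 2 * W) by (rewrite <- (sqrt_pow2 (2 * W)) by (lra); apply sqrt_le_1_alt; auto).
    lra.
Qed.
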